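(* Let $R,T,N,\sigma$ be real numbers with $T\ge3$, $R,N\ge1$, $\sigma\ge\frac12$, let $j$ be a positive integer, and let $(a_n)$ be any sequence of complex numbers. Then for every $\varepsilon>0$, $$\sum_{q\le R}\ \sum_{\substack{\chi\bmod qj\\ \chi\ne\chi_0}}\Bigg(\int_{-T}^{T}\Bigg|\sum_{n\le N}\frac{a_n\chi(n)}{n^{\sigma+it}}\Bigg|\,dt\Bigg)^2\ll_\varepsilon(jRNT)^\varepsilon\,(RNT+jR^2T^2)\sum_{n\le N}\frac{|a_n|^2}{n^{2\sigma}},$$ where the inner sum is over all non-principal Dirichlet characters $\chi$ modulo $qj$, and the implied constant depends only on $\varepsilon$. *)

(* Defs.v *)
From Stdlib Require Import Reals Lra Lia List.
From Coquelicot Require Import Coquelicot.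
Open Scope R_scope.

(* floor of a real number, as a nat (used for "n <= N" with N >= 1) *)
Definition floor_nat (x : R) : nat := Z.to_nat (Int_part x).

(* sum_{n=1}^{K} f n *)
Fixpoint rsum (K : nat) (f : nat -> R) : R :=
  match K with O => 0 | S k => rsum k f + f (S k) end.
Fixpoint csum (K : nat) (f : nat -> C) : C :=
  match K with O => RtoC 0 | S k => Cplus (csum k f) (f (S k)) end.

(* n^{-(sigma + i t)} = n^{-sigma} (cos(t log n) - i sin(t log n)), n >= 1 *)
Definition npow_neg (n : nat) (sigma t : R) : C :=
  (Rpower (INR n) (- sigma) * cos (t * ln (INR n)),
   - (Rpower (INR n) (- sigma) * sin (t * ln (INR n))))%R.

Definition dirichlet_character (m : nat) (chi : nat -> C) : Prop :=
  (forall n, chi (n + m)%nat = chi n) /\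
  (forall a b, chi (a * b)%nat = Cmult (chi a) (chi b)) /\
  chi 1%nat = RtoC 1 /\
  (forall n, chi n = RtoC 0 <-> Nat.gcd n m <> 1%nat).

Definition principal_character (m : nat) (chi : nat -> C) : Prop :=
  forall n, Nat.gcd n m = 1%nat -> chi n = RtoC 1.

Definition nonprincipal_character (m : nat) (chi : nat -> C) : Prop :=
  dirichlet_character m chi /\ ~ principal_character m chi.

Definition char_integral (T N sigma : R) (a chi : nat -> C) : R :=
  RInt (fun t => Cmod (csum (floor_nat N)
          (fun n => Cmult (Cmult (a n) (chi n)) (npow_neg n sigma t)))) (- T) T.

(* Main.v *)
Require Import Defs.
From Stdlib Require Import Reals List Lra Lia Permutation Classical FunctionalExtensionality ZArith.
From Coquelicot Require Import Coquelicot.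
Import ListNotations.
Open Scope R_scope.

Fixpoint sR (n : nat) (f : nat -> R) : R :=
  match n with O => 0 | S k => sR k f + f k end.

Lemma sR_ext n f g : (forall i, (i < n)%nat -> f i = g i) -> sR n f = sR n g.
Proof. induction n; intros H; simpl; auto. rewrite IHn by (intros; apply H; lia). rewrite H by lia. auto. Qed.

Lemma sR_plus n f g : sR n (fun i => f i + g i) = sR n f + sR n g.
Proof. induction n; simpl; [lra|]. rewrite IHn; lra. Qed.

Lemma sR_scal n c f : sR n (fun i => c * f i) = c * sR n f.
Proof. induction n; simpl; [lra|]. rewrite IHn; lra. Qed.

Lemma sR_minus n f g : sR n (fun i => f i - g i) = sR n f - sR n g.
Proof. induction n; simpl; [lra|]. rewrite IHn; lra. Qed.

Lemma sR_0 n : sR n (fun _ => 0) = 0.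
Proof. induction n; simpl; [lra|]. rewrite IHn; lra. Qed.

Lemma sR_le n f g : (forall i, (i < n)%nat -> f i <= g i) -> sR n f <= sR n g.
Proof. induction n; intros H; simpl; [lra|]. assert (f n <= g n) by (apply H; lia).
  assert (sR n f <= sR n g) by (apply IHn; intros; apply H; lia). lra. Qed.

Lemma sR_nonneg n f : (forall i, (i < n)%nat -> 0 <= f i) -> 0 <= sR n f.
Proof. intros H. rewrite <- (sR_0 n). apply sR_le. auto. Qed.

Lemma sR_add a b f : sR (a + b) f = sR a f + sR b (fun i => f (a + i)%nat).
Proof. induction b; simpl. rewrite Nat.add_0_r; lra.
  rewrite Nat.add_succ_r. simpl. rewrite IHb. lra. Qed.

Lemma sR_block B m f : sR (B * m) f = sR B (fun k => sR m (fun r => f (k * m + r)%nat)).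
Proof. induction B; simpl; auto. rewrite Nat.add_comm, sR_add, IHB. auto. Qed.

Lemma sR_swap a b f : sR a (fun i => sR b (fun j => f i j)) = sR b (fun j => sR a (fun i => f i j)).
Proof. induction a; simpl. rewrite sR_0; auto. rewrite IHa, <- sR_plus. auto. Qed.

Lemma sR_extend n M f : (n <= M)%nat -> sR n f = sR M (fun i => if Nat.ltb i n then f i else 0).
Proof. intros H. replace M with (n + (M - n))%nat by lia. rewrite sR_add.
  rewrite (sR_ext (M - n) _ (fun _ => 0)). rewrite sR_0, Rplus_0_r.
  apply sR_ext. intros i Hi. destruct (Nat.ltb_spec i n); auto; lia.
  intros i Hi. destruct (Nat.ltb_spec (n+i) n); auto; lia. Qed.

Lemma rsum_sR K f : rsum K f = sR K (fun i => f (S i)).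
Proof. induction K; simpl; auto. rewrite IHK; auto. Qed.

Lemma csum_fst K f : fst (csum K f) = rsum K (fun n => fst (f n)).
Proof. induction K; simpl; auto. rewrite IHK; auto. Qed.
Lemma csum_snd K f : snd (csum K f) = rsum K (fun n => snd (f n)).
Proof. induction K; simpl; auto. rewrite IHK; auto. Qed.

Lemma sR_abs n f : Rabs (sR n f) <= sR n (fun i => Rabs (f i)).
Proof. induction n; simpl. rewrite Rabs_R0; lra.
  eapply Rle_trans. apply Rabs_triang. lra. Qed.

Definition lsum {X} (L : list X) (g : X -> R) := fold_right Rplus 0 (map g L).

Lemma lsum_le {X} (L : list X) f g : (forall x, In x L -> f x <= g x) -> lsum L f <= lsum L g.
Proof. induction L; simpl; intros H; unfold lsum in *; simpl; [lra|].
  assert (f a <= g a) by auto. assert (fold_right Rplus 0 (map f L) <= fold_right Rplus 0 (map g L)) by (apply IHL; auto). lra. Qed.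
Lemma lsum_scal {X} (L : list X) c g : lsum L (fun x => c * g x) = c * lsum L g.
Proof. induction L; unfold lsum in *; simpl; [lra|]. rewrite IHL; lra. Qed.
Lemma lsum_plus {X} (L : list X) f g : lsum L (fun x => f x + g x) = lsum L f + lsum L g.
Proof. induction L; unfold lsum in *; simpl; [lra|]. rewrite IHL; lra. Qed.

Lemma lsum_ext {X} (L : list X) f g : (forall x, In x L -> f x = g x) -> lsum L f = lsum L g.
Proof. induction L; unfold lsum in *; simpl; intros H; auto. rewrite H by auto. rewrite IHL; auto. Qed.

Definition ip (m : nat) (u v : nat -> C) : R :=
  sR m (fun r => fst (u r) * fst (v r) + snd (u r) * snd (v r)).

Lemma ip_sym m u v : ip m u v = ip m v u.
Proof. unfold ip. apply sR_ext. intros; ring. Qed.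

Lemma ip_lin m Y A B c1 c2 v :
  ip m (fun r => (fst (Y r) - c1 * fst (A r) - c2 * fst (B r),
                  snd (Y r) - c1 * snd (A r) - c2 * snd (B r))) v
  = ip m Y v - c1 * ip m A v - c2 * ip m B v.
Proof. unfold ip. rewrite <- !sR_scal, <- !sR_minus. apply sR_ext; intros; simpl; ring. Qed.

Lemma ip_nonneg m u : 0 <= ip m u u.
Proof. unfold ip. apply sR_nonneg. intros. nra. Qed.

Lemma bessel {X} (L : list X) (w1 w2 : X -> nat -> C) m M :
  0 <= M -> NoDup L ->
  (forall x y, In x L -> In y L -> x <> y ->
     ip m (w1 x) (w1 y) = 0 /\ ip m (w1 x) (w2 y) = 0 /\
     ip m (w2 x) (w1 y) = 0 /\ ip m (w2 x) (w2 y) = 0) ->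
  (forall x, In x L -> ip m (w1 x) (w2 x) = 0 /\ ip m (w2 x) (w2 x) = ip m (w1 x) (w1 x)
     /\ 0 < ip m (w1 x) (w1 x) <= M) ->
  forall Y, lsum L (fun x => ip m Y (w1 x) ^ 2 + ip m Y (w2 x) ^ 2) <= M * ip m Y Y.
Proof.
  intros HM HL. induction HL as [|x l Hx Hl IH]; intros Horth Hnorm Y.
  - unfold lsum; simpl. pose proof (ip_nonneg m Y). nra.
  - destruct (Hnorm x (or_introl eq_refl)) as [H12 [H22 [Hn1 Hn2]]].
    set (nu := ip m (w1 x) (w1 x)) in *.
    set (a1 := ip m Y (w1 x)). set (a2 := ip m Y (w2 x)).
    set (c1 := a1 / nu). set (c2 := a2 / nu).
    set (Y' := fun r => (fst (Y r) - c1 * fst (w1 x r) - c2 * fst (w2 x r),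
                  snd (Y r) - c1 * snd (w1 x r) - c2 * snd (w2 x r))).
    assert (E1 : forall v, ip m Y' v = ip m Y v - c1 * ip m (w1 x) v - c2 * ip m (w2 x) v)
      by (intros; apply ip_lin).
    assert (Htail : lsum l (fun y => ip m Y (w1 y) ^ 2 + ip m Y (w2 y) ^ 2)
                  = lsum l (fun y => ip m Y' (w1 y) ^ 2 + ip m Y' (w2 y) ^ 2)).
    { apply lsum_ext. intros y Hy. assert (x <> y) by (intro; subst; auto).
      destruct (Horth x y (or_introl eq_refl) (or_intror Hy) H) as [o1 [o2 [o3 o4]]].
      rewrite !E1, o1, o2, o3, o4. f_equal; f_equal; ring. }
    assert (HYY : ip m Y' Y' = ip m Y Y - (a1 ^ 2 + a2 ^ 2) / nu).
    { rewrite E1. rewrite (ip_sym m Y Y'), (ip_sym m (w1 x) Y'), (ip_sym m (w2 x) Y').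
      rewrite !E1. rewrite (ip_sym m (w2 x) (w1 x)), H12, H22. fold nu.
      rewrite (ip_sym m (w1 x) Y), (ip_sym m (w2 x) Y). fold a1 a2.
      unfold c1, c2. field. lra. }
    assert (IH' : lsum l (fun y => ip m Y' (w1 y) ^ 2 + ip m Y' (w2 y) ^ 2) <= M * ip m Y' Y').
    { apply IH. intros; apply Horth; simpl; auto. intros; apply Hnorm; simpl; auto. }
    change (lsum (x :: l) (fun x0 => ip m Y (w1 x0) ^ 2 + ip m Y (w2 x0) ^ 2))
      with (a1 ^ 2 + a2 ^ 2 + lsum l (fun x0 => ip m Y (w1 x0) ^ 2 + ip m Y (w2 x0) ^ 2)).
    rewrite Htail. rewrite HYY in IH'.
    assert ((a1 ^ 2 + a2 ^ 2) * (1 - M / nu) <= 0).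
    { assert (1 - M / nu <= 0). { assert (0 <= (M - nu) / nu) by (apply Rdiv_le_0_compat; lra).
        assert ((M - nu) / nu = M / nu - 1) by (field; lra). lra. } nra. }
    assert (M * ((a1 ^ 2 + a2 ^ 2) / nu) = (a1 ^ 2 + a2 ^ 2) * (M / nu)) by (unfold Rdiv; ring).
    nra.
Qed.

Lemma lsum_perm {X} (l l' : list X) g : Permutation l l' -> lsum l g = lsum l' g.
Proof. intros P; induction P; unfold lsum in *; simpl in *; lra. Qed.

Lemma lsum_map {X Y} (l : list X) (f : X -> Y) g : lsum (map f l) g = lsum l (fun x => g (f x)).
Proof. unfold lsum. rewrite map_map. auto. Qed.

Lemma sR_seq m g : sR m g = lsum (seq 0 m) g.
Proof.
  assert (Hf : forall l c, fold_right Rplus c l = fold_right Rplus 0 l + c).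
  { induction l; simpl; intros; auto. lra. rewrite IHl. lra. }
  induction m; auto. rewrite seq_S. unfold lsum in *. rewrite map_app, fold_right_app.
  simpl. rewrite Hf. rewrite <- IHm. simpl. lra. Qed.

Lemma periodic_k (g : nat -> R) m : (forall n, g (n + m)%nat = g n) -> forall k n, g (n + k * m)%nat = g n.
Proof. intros H k; induction k; intros n; simpl. rewrite Nat.add_0_r; auto.
  replace (n + (m + k * m))%nat with (n + k * m + m)%nat by lia. rewrite H; auto. Qed.

Lemma periodic_mod (g : nat -> R) m : (m <> 0)%nat -> (forall n, g (n + m)%nat = g n) -> forall n, g n = g (n mod m).
Proof. intros Hm H n. rewrite (Nat.div_mod_eq n m) at 1.
  rewrite Nat.add_comm, Nat.mul_comm. apply periodic_k; auto. Qed.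

Lemma mod_inj a m r r' : Nat.gcd a m = 1%nat -> (r < m)%nat -> (r' < m)%nat ->
  (a * r) mod m = (a * r') mod m -> r = r'.
Proof.
  intros Hg Hr Hr' E.
  assert (Hm : (m <> 0)%nat) by lia.
  assert (K : forall r r', (r <= r')%nat -> (r' < m)%nat -> (a * r) mod m = (a * r') mod m -> r = r').
  { clear r r' Hr Hr' E. intros r r' Hle Hr' E.
    pose proof (Nat.div_mod_eq (a * r) m) as D1. pose proof (Nat.div_mod_eq (a * r') m) as D2.
    set (Q := (a * r / m)%nat) in *. set (Q' := (a * r' / m)%nat) in *.
    assert (a * r <= a * r')%nat by (apply Nat.mul_le_mono_l; auto).
    assert (Hd : Nat.divide m (a * (r' - r))).
    { exists (Q' - Q)%nat. rewrite Nat.mul_sub_distr_l, Nat.mul_sub_distr_r.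
      rewrite (Nat.mul_comm Q' m), (Nat.mul_comm Q m). rewrite E in D1. lia. }
    apply Nat.gauss in Hd. 2: { rewrite Nat.gcd_comm; auto. }
    destruct Hd as [z Hz]. destruct z; simpl in Hz; lia. }
  destruct (Nat.le_ge_cases r r'). apply K; auto. symmetry; apply K; auto. Qed.

Lemma reindex (g : nat -> R) m a : (m <> 0)%nat -> (forall n, g (n + m)%nat = g n) ->
  Nat.gcd a m = 1%nat -> sR m (fun r => g (a * r)%nat) = sR m g.
Proof.
  intros Hm Hp Hg.
  rewrite (sR_ext m (fun r => g (a * r)%nat) (fun r => g ((a * r) mod m)%nat))
    by (intros; apply periodic_mod; auto).
  rewrite !sR_seq.
  rewrite <- (lsum_map (seq 0 m) (fun r => ((a * r) mod m)%nat) g).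
  apply lsum_perm. apply Permutation_map_same_l.
  - apply NoDup_map_NoDup_ForallPairs. 2: apply seq_NoDup.
    intros x y Hx Hy E. apply in_seq in Hx, Hy. apply (mod_inj a m); auto; lia.
  - intros y Hy. apply in_map_iff in Hy. destruct Hy as [x [<- _]].
    apply in_seq. split. lia. simpl. apply Nat.mod_upper_bound; auto. Qed.

Lemma sR_shift1 (h : nat -> R) m : h m = h O -> sR m (fun r => h (S r)) = sR m h.
Proof. intros E. pose proof (sR_add 1 m h) as A1.
  replace (1 + m)%nat with (S m) in A1 by lia.
  assert (sR 1 h = h O) by (simpl; lra).
  change (sR (S m) h) with (sR m h + h m) in A1. rewrite H in A1.
  replace (fun i => h (1 + i)%nat) with (fun r => h (S r)) in A1 by auto. lra. Qed.

Definition n2 (z : C) : R := fst z ^ 2 + snd z ^ 2.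

Lemma sR_first m f : (m <> 0)%nat -> (forall i, (i < m)%nat -> 0 <= f i) -> f O <= sR m f.
Proof. intros Hm H. replace m with (1 + (m - 1))%nat by lia. rewrite sR_add.
  assert (0 <= sR (m - 1) (fun i => f (1 + i)%nat)) by (apply sR_nonneg; intros; apply H; lia).
  assert (sR 1 f = f O) by (simpl; lra). lra. Qed.

Lemma chi_norm1 m chi a : (m <> 0)%nat -> dirichlet_character m chi -> Nat.gcd a m = 1%nat ->
  n2 (chi a) = 1.
Proof.
  intros Hm [Hper [Hmul [H1 Hz]]] Hg.
  set (g := fun n => n2 (chi n)).
  assert (Hp : forall n, g (n + m)%nat = g n) by (intros; unfold g; rewrite Hper; auto).
  pose proof (reindex g m a Hm Hp Hg) as E.
  rewrite (sR_ext m _ (fun r => g a * g r)) in E.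
  2: { intros; unfold g, n2. rewrite Hmul. simpl. ring. }
  rewrite sR_scal in E.
  assert (Tpos : 0 < sR m g).
  { rewrite <- (sR_shift1 g m). 2: { rewrite <- (Hp O). auto. }
    eapply Rlt_le_trans. 2: apply sR_first; auto. unfold g, n2; rewrite H1; simpl; lra.
    intros; unfold g, n2; nra. }
  fold (g a). nra. Qed.

Lemma chi_zero_or m chi n : dirichlet_character m chi -> Nat.gcd n m <> 1%nat -> chi n = RtoC 0.
Proof. intros [_ [_ [_ Hz]]] H. apply Hz; auto. Qed.

Lemma chi_orth m chi1 chi2 : (m <> 0)%nat -> dirichlet_character m chi1 -> dirichlet_character m chi2 ->
  chi1 <> chi2 ->
  sR m (fun r => fst (chi1 (S r)) * fst (chi2 (S r)) + snd (chi1 (S r)) * snd (chi2 (S r))) = 0 /\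
  sR m (fun r => snd (chi1 (S r)) * fst (chi2 (S r)) - fst (chi1 (S r)) * snd (chi2 (S r))) = 0.
Proof.
  intros Hm D1 D2 Hne.
  assert (Hex : exists a, chi1 a <> chi2 a).
  { apply not_all_ex_not. intro H. apply Hne. apply functional_extensionality; auto. }
  destruct Hex as [a Ha].
  assert (Hg : Nat.gcd a m = 1%nat).
  { destruct (Nat.eq_dec (Nat.gcd a m) 1); auto. exfalso. apply Ha.
    rewrite (chi_zero_or m chi1), (chi_zero_or m chi2); auto. }
  pose proof (chi_norm1 m chi2 a Hm D2 Hg) as N2. unfold n2 in N2.
  destruct D1 as [P1 [M1 [O1 Z1]]]. destruct D2 as [P2 [M2 [O2 Z2]]].
  set (hR := fun n => fst (chi1 n) * fst (chi2 n) + snd (chi1 n) * snd (chi2 n)).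
  set (hI := fun n => snd (chi1 n) * fst (chi2 n) - fst (chi1 n) * snd (chi2 n)).
  assert (PR : forall n, hR (n + m)%nat = hR n) by (intros; unfold hR; rewrite P1, P2; auto).
  assert (PI : forall n, hI (n + m)%nat = hI n) by (intros; unfold hI; rewrite P1, P2; auto).
  change (sR m (fun r => hR (S r)) = 0 /\ sR m (fun r => hI (S r)) = 0).
  rewrite !sR_shift1 by (rewrite <- (PR O) || rewrite <- (PI O); auto).
  pose proof (reindex hR m a Hm PR Hg) as ER. pose proof (reindex hI m a Hm PI Hg) as EI.
  set (uR := hR a). set (uI := hI a).
  rewrite (sR_ext m _ (fun r => uR * hR r - uI * hI r)) in ER.
  2: { intros; unfold uR, uI, hR, hI. rewrite M1, M2. simpl. ring. }
  rewrite (sR_ext m _ (fun r => uR * hI r + uI * hR r)) in EI.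
  2: { intros; unfold uR, uI, hR, hI. rewrite M1, M2. simpl. ring. }
  rewrite sR_minus, !sR_scal in ER. rewrite sR_plus, !sR_scal in EI.
  set (SR := sR m hR) in *. set (SI := sR m hI) in *.
  assert (E0 : (SR ^ 2 + SI ^ 2) * (1 - uR) = 0).
  { replace ((SR ^ 2 + SI ^ 2) * (1 - uR)) with (SR * (SR - (uR * SR - uI * SI)) + SI * (SI - (uR * SI + uI * SR))) by ring.
    rewrite ER, EI. ring. }
  destruct (Req_dec (SR ^ 2 + SI ^ 2) 0) as [Z | NZ].
  { split; nra. }
  exfalso. assert (uR = 1) by (apply Rmult_eq_reg_l with (SR ^ 2 + SI ^ 2); nra).
  assert (uI * SI = 0) by nra. assert (uI * SR = 0) by nra.
  assert (uI = 0) by (destruct (Req_dec uI 0); auto; exfalso; apply NZ;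
     assert (SI = 0) by (apply Rmult_eq_reg_l with uI; lra); assert (SR = 0) by (apply Rmult_eq_reg_l with uI; lra); subst SR SI; nra).
  apply Ha. unfold uR, uI, hR, hI in *.
  destruct (chi1 a) as [p q]; destruct (chi2 a) as [s t]; simpl in *.
  assert (N2' : s * s + t * t = 1) by (simpl in N2; lra).
  assert (Ep : p = s * (p * s + q * t) - t * (q * s - p * t)).
  { replace p with (p * (s * s + t * t)) at 1 by (rewrite N2'; ring). ring. }
  assert (Eq : q = t * (p * s + q * t) + s * (q * s - p * t)).
  { replace q with (q * (s * s + t * t)) at 1 by (rewrite N2'; ring). ring. }
  rewrite H, H2 in Ep, Eq. f_equal; lra. Qed.

Definition Iint (T d : R) : R := if Req_EM_T d 0 then 2 * T else 2 * sin (T * d) / d.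

Lemma is_RInt_trig T A Bc d : 0 <= T ->
  is_RInt (fun t => A * cos (t * d) - Bc * sin (t * d)) (- T) T (A * Iint T d).
Proof.
  intros HT. unfold Iint. destruct (Req_EM_T d 0) as [E|E].
  - subst d. replace (A * (2 * T)) with (scal (T - - T) A).
    2: { unfold scal; simpl; unfold mult; simpl. ring. }
    eapply is_RInt_ext.
    2: apply (is_RInt_const (-T) T A).
    intros; simpl. rewrite Rmult_0_r, cos_0, sin_0. ring.
  - replace (A * (2 * sin (T * d) / d)) with
      (minus ((fun t => A * sin (t * d) / d + Bc * cos (t * d) / d) T)
             ((fun t => A * sin (t * d) / d + Bc * cos (t * d) / d) (- T))).
    + apply (is_RInt_derive (fun t => A * sin (t * d) / d + Bc * cos (t * d) / d)
                            (fun t => A * cos (t * d) - Bc * sin (t * d))).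
      * intros x _. auto_derive. auto. field. auto.
      * intros x _. apply (ex_derive_continuous (K := R_AbsRing) (V := R_NormedModule) (fun t => A * cos (t * d) - Bc * sin (t * d))). auto_derive. auto.
    + unfold minus, plus, opp; simpl.
      replace (- T * d) with (- (T * d)) by ring. rewrite sin_neg, cos_neg. field. auto.
Qed.

Lemma is_RInt_sR B (g : nat -> R -> R) (v : nat -> R) a b :
  (forall k, (k < B)%nat -> is_RInt (g k) a b (v k)) ->
  is_RInt (fun t => sR B (fun k => g k t)) a b (sR B v).
Proof.
  induction B; intros H.
  - replace (sR 0 v) with (scal (b - a) 0) by (unfold scal; simpl; unfold mult; simpl; ring).
    eapply is_RInt_ext. 2: apply (is_RInt_const a b 0). intros; auto.
  - simpl.
  - apply (is_RInt_plus (fun t => sR B (fun k => g k t)) (g B)).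
    apply IHB; intros; apply H; lia. apply H; lia.
Qed.

Lemma sR_sq B f : sR B f ^ 2 = sR B (fun k => sR B (fun l => f k * f l)).
Proof. transitivity (sR B (fun k => f k * sR B f)).
  - rewrite (sR_ext B (fun k => f k * sR B f) (fun k => sR B f * f k)) by (intros; ring).
    rewrite sR_scal. ring.
  - apply sR_ext; intros. rewrite <- sR_scal. auto. Qed.

(* the integral of |sum_k c_k e(-t theta_k)|^2 *)
Definition Uf B (al be th : nat -> R) t := sR B (fun k => al k * cos (t * th k) + be k * sin (t * th k)).
Definition Vf B (al be th : nat -> R) t := sR B (fun k => be k * cos (t * th k) - al k * sin (t * th k)).

Lemma is_RInt_UV B al be th T : 0 <= T ->
  is_RInt (fun t => Uf B al be th t ^ 2 + Vf B al be th t ^ 2) (- T) T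
    (sR B (fun k => sR B (fun l => (al k * al l + be k * be l) * Iint T (th k - th l)))).
Proof.
  intros HT. eapply is_RInt_ext.
  2: { apply is_RInt_sR. intros k _. apply is_RInt_sR. intros l _.
       apply (is_RInt_trig T (al k * al l + be k * be l) (al k * be l - be k * al l) (th k - th l)); auto. }
  intros t _. unfold Uf, Vf. rewrite !sR_sq, <- sR_plus. apply sR_ext; intros k _.
  rewrite <- sR_plus. apply sR_ext; intros l _.
  replace (t * (th k - th l)) with (t * th k - t * th l) by ring.
  rewrite cos_minus, sin_minus. ring.
Qed.

Definition hh (d : nat) : R := match d with O => 0 | S _ => 1 / INR d end.
Definition dst (k l : nat) : nat := (k - l + (l - k))%nat.

Lemma hh_nonneg d : 0 <= hh d.
Proof. destruct d. simpl; lra. unfold hh. apply Rlt_le, Rdiv_lt_0_compat; [lra|]. apply lt_0_INR; lia. Qed.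

Lemma sR_mono_range n M f : (n <= M)%nat -> (forall i, 0 <= f i) -> sR n f <= sR M f.
Proof. intros H Hf. replace M with (n + (M - n))%nat by lia. rewrite sR_add.
  assert (0 <= sR (M - n) (fun i => f (n + i)%nat)) by (apply sR_nonneg; auto). lra. Qed.

Lemma harm_gen k : forall B, sR B (fun l => hh (dst k l)) <= sR (S k) hh + sR B hh.
Proof.
  induction k; intros B.
  - rewrite (sR_ext B _ hh). 2: { intros; unfold dst; f_equal; lia. }
    simpl. lra.
  - destruct B.
    { assert (0 <= sR (S (S k)) hh) by (apply sR_nonneg; intros; apply hh_nonneg).
      assert (sR 0 hh = 0) by reflexivity. assert (sR 0 (fun l => hh (dst (S k) l)) = 0) by reflexivity. lra. }
    replace (S B) with (1 + B)%nat by lia. rewrite !sR_add.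
    rewrite (sR_ext B (fun i => hh (dst (S k) (1 + i))) (fun l => hh (dst k l))).
    2: { intros; unfold dst; f_equal; lia. }
    specialize (IHk B).
    assert (sR 1 (fun l => hh (dst (S k) l)) = hh (S k)) by (cbn [sR]; replace (dst (S k) 0) with (S k) by (unfold dst; lia); lra).
    assert (0 <= sR 1 hh) by (cbn [sR]; pose proof (hh_nonneg 0); lra).
    assert (sR (S (S k)) hh = sR (S k) hh + hh (S k)) by auto.
    assert (0 <= sR B (fun i => hh (1 + i))) by (apply sR_nonneg; intros; apply hh_nonneg).
    rewrite <- (sR_add 1 B hh). pose proof (sR_mono_range B (1 + B) hh ltac:(lia) hh_nonneg). lra.
Qed.

Lemma harm2 k B : (k < B)%nat -> sR B (fun l => hh (dst k l)) <= 2 * sR B hh.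
Proof. intros H. pose proof (harm_gen k B). pose proof (sR_mono_range (S k) B hh H hh_nonneg). lra. Qed.

Lemma ln_le_xm1 x : 0 < x -> ln x <= x - 1.
Proof. intros Hx. destruct (Req_dec (ln x) 0). rewrite H. assert (x = 1).
  { rewrite <- (exp_ln x Hx), H, exp_0; auto. } lra.
  pose proof (exp_ineq1 (ln x) H). rewrite exp_ln in H0; auto. lra. Qed.

Lemma harm_log B : (1 <= B)%nat -> sR B hh <= 1 + ln (INR B).
Proof.
  intros HB. assert (K : forall n, (1 <= n)%nat -> sR (S n) hh <= 1 + ln (INR n)).
  { induction n; intros Hn. lia. destruct (Nat.eq_dec n 0).
    - subst. simpl. rewrite ln_1. lra.
    - specialize (IHn ltac:(lia)). change (sR (S (S n)) hh) with (sR (S n) hh + hh (S n)).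
      assert (hh (S n) <= ln (INR (S n)) - ln (INR n)).
      { unfold hh. assert (0 < INR n) by (apply lt_0_INR; lia). rewrite S_INR in *.
        pose proof (ln_le_xm1 (INR n / (INR n + 1))). rewrite ln_div in H0 by lra.
        assert (INR n / (INR n + 1) - 1 = - (1 / (INR n + 1))) by (field; lra).
        assert (0 < INR n / (INR n + 1)) by (apply Rdiv_lt_0_compat; lra). lra. }
      lra. }
  destruct B. lia. destruct (Nat.eq_dec B 0). subst. simpl. rewrite ln_1. lra.
  eapply Rle_trans. apply K. lia. apply Rplus_le_compat_l. apply Rlt_le, ln_increasing.
  apply lt_0_INR; lia. apply lt_INR; lia. Qed.

Lemma sR_delta B k x : (k < B)%nat -> sR B (fun l => if Nat.eq_dec k l then x else 0) = x.
Proof. intros H. replace B with (k + (1 + (B - k - 1)))%nat by lia.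
  rewrite !sR_add. rewrite (sR_ext k _ (fun _ => 0)). rewrite sR_0.
  rewrite (sR_ext (B - k - 1) _ (fun _ => 0)). rewrite sR_0. simpl.
  destruct (Nat.eq_dec k (k + 0)). lra. lia.
  intros; destruct (Nat.eq_dec k (k + (1 + i))); auto; lia.
  intros; destruct (Nat.eq_dec k i); auto; lia. Qed.

Lemma term_bound T c al be th k l : 0 <= T -> 0 < c ->
  (k <> l -> (al k = 0 /\ be k = 0) \/ (al l = 0 /\ be l = 0) \/ c * INR (dst k l) <= Rabs (th k - th l)) ->
  (al k * al l + be k * be l) * Iint T (th k - th l) <=
  (if Nat.eq_dec k l then 2 * T * (al k ^ 2 + be k ^ 2) else 0) +
  (al k ^ 2 + be k ^ 2 + (al l ^ 2 + be l ^ 2)) * hh (dst k l) / c.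
Proof.
  intros HT Hc Hsep. destruct (Nat.eq_dec k l) as [E|E].
  - subst l. unfold Iint. rewrite Rminus_diag. destruct (Req_EM_T 0 0); [|lra].
    replace (dst k k) with O by (unfold dst; lia). simpl. unfold Rdiv; lra.
  - assert (Hd : (1 <= dst k l)%nat) by (unfold dst; lia).
    assert (Hh : 0 <= (al k ^ 2 + be k ^ 2 + (al l ^ 2 + be l ^ 2)) * hh (dst k l) / c).
    { apply Rmult_le_pos. apply Rmult_le_pos. nra. apply hh_nonneg. apply Rlt_le, Rinv_0_lt_compat; auto. }
    destruct (Hsep E) as [[Z1 Z2] | [[Z1 Z2] | S]].
    + assert (al k * al l + be k * be l = 0) by (rewrite Z1, Z2; ring). rewrite H, Rmult_0_l. lra.
    + assert (al k * al l + be k * be l = 0) by (rewrite Z1, Z2; ring). rewrite H, Rmult_0_l. lra.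
    + assert (HdI : 1 <= INR (dst k l)) by (apply (le_INR 1); auto).
      set (d := th k - th l) in *. set (A := al k * al l + be k * be l).
      assert (Hdpos : 0 < Rabs d) by nra.
      assert (d <> 0) by (intro Z; rewrite Z, Rabs_R0 in Hdpos; lra).
      unfold Iint. destruct (Req_EM_T d 0); [contradiction|].
      assert (HA : Rabs A <= (al k ^ 2 + be k ^ 2 + (al l ^ 2 + be l ^ 2)) / 2).
      { unfold A. pose proof (pow2_ge_0 (al k - al l)). pose proof (pow2_ge_0 (be k - be l)).
        pose proof (pow2_ge_0 (al k + al l)). pose proof (pow2_ge_0 (be k + be l)).
        apply Rabs_le. split; nra. }
      assert (S1 : A * (2 * sin (T * d) / d) <= Rabs A * 2 / Rabs d).
      { eapply Rle_trans. apply Rle_abs. unfold Rdiv. rewrite !Rabs_mult, Rabs_inv.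
        rewrite (Rabs_right 2) by lra. pose proof (Rabs_pos A). pose proof (SIN_bound (T * d)).
        assert (Rabs (sin (T * d)) <= 1) by (apply Rabs_le; lra).
        pose proof (Rinv_0_lt_compat _ Hdpos). pose proof (Rabs_pos (sin (T * d))). assert (0 <= Rabs A * / Rabs d) by (apply Rmult_le_pos; lra). nra. }
      assert (S2 : Rabs A * 2 / Rabs d <= Rabs A * 2 / (c * INR (dst k l))).
      { unfold Rdiv. apply Rmult_le_compat_l. pose proof (Rabs_pos A); lra.
        apply Rinv_le_contravar; auto. nra. }
      assert (S3 : Rabs A * 2 / (c * INR (dst k l)) <=
                   (al k ^ 2 + be k ^ 2 + (al l ^ 2 + be l ^ 2)) * hh (dst k l) / c).
      { assert (Eh : hh (dst k l) = 1 / INR (dst k l)) by (destruct (dst k l); [lia|reflexivity]).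
        rewrite Eh. assert (0 < INR (dst k l)) by lra.
        replace ((al k ^ 2 + be k ^ 2 + (al l ^ 2 + be l ^ 2)) * (1 / INR (dst k l)) / c)
          with ((al k ^ 2 + be k ^ 2 + (al l ^ 2 + be l ^ 2)) / 2 * 2 / (c * INR (dst k l))) by (field; lra).
        unfold Rdiv. apply Rmult_le_compat_r. apply Rlt_le, Rinv_0_lt_compat; nra. nra. }
      lra.
Qed.

Lemma dst_sym k l : dst k l = dst l k.
Proof. unfold dst; lia. Qed.

Lemma Vbound B al be th T c : 0 <= T -> 0 < c ->
  (forall k l, (k < B)%nat -> (l < B)%nat -> k <> l ->
     (al k = 0 /\ be k = 0) \/ (al l = 0 /\ be l = 0) \/ c * INR (dst k l) <= Rabs (th k - th l)) ->
  sR B (fun k => sR B (fun l => (al k * al l + be k * be l) * Iint T (th k - th l)))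
  <= (2 * T + 4 * sR B hh / c) * sR B (fun k => al k ^ 2 + be k ^ 2).
Proof.
  intros HT Hc Hsep. set (E := fun k => al k ^ 2 + be k ^ 2).
  assert (HE : forall k, 0 <= E k) by (intros; unfold E; nra).
  eapply Rle_trans.
  { apply sR_le; intros k Hk. apply sR_le; intros l Hl.
    apply (term_bound T c al be th k l HT Hc). intros; apply Hsep; auto. }
  rewrite (sR_ext B _ (fun k => 2 * T * E k + / c * (E k * sR B (fun l => hh (dst k l)) + sR B (fun l => E l * hh (dst k l))))).
  2: { intros k Hk. rewrite sR_plus. rewrite sR_delta by auto. fold (E k).
       f_equal. rewrite <- sR_scal, <- sR_plus, <- sR_scal. apply sR_ext; intros. unfold E, Rdiv. ring. }
  rewrite sR_plus, sR_scal, sR_scal, sR_plus.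
  rewrite (sR_swap B B (fun k l => E l * hh (dst k l))).
  rewrite (sR_ext B (fun j => sR B (fun i => E j * hh (dst i j))) (fun j => E j * sR B (fun i => hh (dst j i)))).
  2: { intros; rewrite <- sR_scal. apply sR_ext; intros; rewrite dst_sym; auto. }
  assert (Hb : sR B (fun k => E k * sR B (fun l => hh (dst k l))) <= 2 * sR B hh * sR B E).
  { rewrite <- sR_scal. apply sR_le. intros k Hk. pose proof (harm2 k B Hk). specialize (HE k). nra. }
  assert (0 < / c) by (apply Rinv_0_lt_compat; auto).
  fold E. unfold Rdiv.
  assert (/ c * (sR B (fun k => E k * sR B (fun l => hh (dst k l))) + sR B (fun k => E k * sR B (fun l => hh (dst k l))))
          <= / c * (4 * sR B hh * sR B E)) by (apply Rmult_le_compat_l; lra).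
  nra.
Qed.

Lemma chi_per_k m (chi : nat -> C) : (forall n, chi (n + m)%nat = chi n) -> forall k n, chi (n + k * m)%nat = chi n.
Proof. intros H k; induction k; intros n; simpl. rewrite Nat.add_0_r; auto.
  replace (n + (m + k * m))%nat with (n + k * m + m)%nat by lia. rewrite H; auto. Qed.

Definition pw (n : nat) (s : R) := Rpower (INR n) (- s).
Definition alpha (a : nat -> C) s n := fst (a n) * pw n s.
Definition beta (a : nat -> C) s n := snd (a n) * pw n s.
Definition alF a s (chi : nat -> C) i := fst (chi (S i)) * alpha a s (S i) - snd (chi (S i)) * beta a s (S i).
Definition beF a s (chi : nat -> C) i := fst (chi (S i)) * beta a s (S i) + snd (chi (S i)) * alpha a s (S i).
Definition thF i := ln (INR (S i)).
Definition alR a s K m r k := if Nat.ltb (k * m + r) K then alpha a s (S (k * m + r)) else 0.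
Definition beR a s K m r k := if Nat.ltb (k * m + r) K then beta a s (S (k * m + r)) else 0.
Definition thR m r k := ln (INR (S (k * m + r))).

Definition Fs K a s (chi : nat -> C) t :=
  csum K (fun n => Cmult (Cmult (a n) (chi n)) (npow_neg n s t)).

Lemma Fs_fst K a s chi t : fst (Fs K a s chi t) = Uf K (alF a s chi) (beF a s chi) thF t.
Proof. unfold Fs. rewrite csum_fst, rsum_sR. unfold Uf. apply sR_ext; intros.
  unfold alF, beF, alpha, beta, thF, npow_neg, pw. simpl. ring. Qed.

Lemma Fs_snd K a s chi t : snd (Fs K a s chi t) = Vf K (alF a s chi) (beF a s chi) thF t.
Proof. unfold Fs. rewrite csum_snd, rsum_sR. unfold Vf. apply sR_ext; intros.
  unfold alF, beF, alpha, beta, thF, npow_neg, pw. simpl. ring. Qed.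

Lemma sR_classes K m (f : nat -> R) : (1 <= m)%nat ->
  sR K f = sR m (fun r => sR K (fun k => if Nat.ltb (k * m + r) K then f (k * m + r)%nat else 0)).
Proof. intros Hm. rewrite (sR_extend K (K * m) f) by nia. rewrite sR_block, sR_swap. auto. Qed.

Lemma Fs_fst_split K m a s chi t : (1 <= m)%nat -> (forall n, chi (n + m)%nat = chi n) ->
  fst (Fs K a s chi t) = sR m (fun r => fst (chi (S r)) * Uf K (alR a s K m r) (beR a s K m r) (thR m r) t
                                      - snd (chi (S r)) * Vf K (alR a s K m r) (beR a s K m r) (thR m r) t).
Proof.
  intros Hm Hp. unfold Fs. rewrite csum_fst, rsum_sR, (sR_classes K m _ Hm).
  apply sR_ext; intros r Hr. unfold Uf, Vf. rewrite <- !sR_scal, <- sR_minus. apply sR_ext; intros k Hk.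
  unfold alR, beR, thR. destruct (Nat.ltb (k * m + r) K).
  - replace (S (k * m + r)) with (S r + k * m)%nat by lia. rewrite (chi_per_k m chi Hp).
    unfold alpha, beta, npow_neg, pw. simpl. ring.
  - ring.
Qed.

Lemma Fs_snd_split K m a s chi t : (1 <= m)%nat -> (forall n, chi (n + m)%nat = chi n) ->
  snd (Fs K a s chi t) = sR m (fun r => fst (chi (S r)) * Vf K (alR a s K m r) (beR a s K m r) (thR m r) t
                                      + snd (chi (S r)) * Uf K (alR a s K m r) (beR a s K m r) (thR m r) t).
Proof.
  intros Hm Hp. unfold Fs. rewrite csum_snd, rsum_sR, (sR_classes K m _ Hm).
  apply sR_ext; intros r Hr. unfold Uf, Vf. rewrite <- !sR_scal, <- sR_plus. apply sR_ext; intros k Hk.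
  unfold alR, beR, thR. destruct (Nat.ltb (k * m + r) K).
  - replace (S (k * m + r)) with (S r + k * m)%nat by lia. rewrite (chi_per_k m chi Hp).
    unfold alpha, beta, npow_neg, pw. simpl. ring.
  - ring.
Qed.

Lemma Cmod_sq z : Cmod z ^ 2 = fst z ^ 2 + snd z ^ 2.
Proof. unfold Cmod. apply pow2_sqrt. nra. Qed.

Lemma energy_term a s n : alpha a s n ^ 2 + beta a s n ^ 2 = Cmod (a n) ^ 2 / Rpower (INR n) (2 * s).
Proof. unfold alpha, beta, pw. rewrite Cmod_sq.
  assert (E : Rpower (INR n) (- s) ^ 2 = / Rpower (INR n) (2 * s)).
  { simpl. rewrite Rmult_1_r, <- Rpower_plus. rewrite <- Rpower_Ropp. f_equal. ring. }
  unfold Rdiv. rewrite <- E. ring. Qed.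

Lemma energy K m a s : (1 <= m)%nat ->
  sR m (fun r => sR K (fun k => alR a s K m r k ^ 2 + beR a s K m r k ^ 2))
  = rsum K (fun n => Cmod (a n) ^ 2 / Rpower (INR n) (2 * s)).
Proof. intros Hm. rewrite rsum_sR, (sR_classes K m _ Hm). apply sR_ext; intros r _.
  apply sR_ext; intros k _. unfold alR, beR. destruct (Nat.ltb (k * m + r) K).
  apply energy_term. ring. Qed.

Lemma log_sep x y Kr : 1 <= x <= Kr -> 1 <= y <= Kr -> Rabs (x - y) / Kr <= Rabs (ln x - ln y).
Proof.
  assert (W : forall x y, 1 <= x <= Kr -> 1 <= y <= Kr -> y <= x -> (x - y) / Kr <= ln x - ln y).
  { intros u v Hu Hv Huv. pose proof (ln_le_xm1 (v / u)). rewrite ln_div in H by lra.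
    assert (0 < v / u) by (apply Rdiv_lt_0_compat; lra). specialize (H H0).
    assert ((u - v) / Kr <= (u - v) / u).
    { unfold Rdiv. apply Rmult_le_compat_l. lra. apply Rinv_le_contravar; lra. }
    assert ((u - v) / u = - (v / u - 1)) by (field; lra). lra. }
  intros Hx Hy. destruct (Rle_dec y x).
  - rewrite !Rabs_right. apply W; auto. assert (ln y <= ln x).
    { destruct (Req_dec y x). subst; lra. apply Rlt_le, ln_increasing; lra. } lra. lra.
  - rewrite Rabs_left, Rabs_left. replace (- (x - y)) with (y - x) by ring.
    replace (- (ln x - ln y)) with (ln y - ln x) by ring. apply W; auto; lra.
    assert (ln x < ln y) by (apply ln_increasing; lra). lra. lra.
Qed.

Lemma INR_dst k l : INR (dst k l) = Rabs (INR k - INR l).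
Proof. unfold dst. destruct (Nat.le_ge_cases k l).
  - replace (k - l + (l - k))%nat with (l - k)%nat by lia. rewrite minus_INR by auto.
    rewrite Rabs_left1. ring. apply le_INR in H. lra.
  - replace (k - l + (l - k))%nat with (k - l)%nat by lia. rewrite minus_INR by auto.
    rewrite Rabs_right. ring. apply le_INR in H. lra. Qed.

Lemma sep_class a s K m r : (1 <= m)%nat -> (1 <= K)%nat ->
  forall k l, (k < K)%nat -> (l < K)%nat -> k <> l ->
  (alR a s K m r k = 0 /\ beR a s K m r k = 0) \/ (alR a s K m r l = 0 /\ beR a s K m r l = 0) \/
  (INR m / INR K) * INR (dst k l) <= Rabs (thR m r k - thR m r l).
Proof.
  intros Hm HK k l Hk Hl Hkl. unfold alR, beR.
  destruct (Nat.ltb_spec (k * m + r) K) as [Bk|Bk]; [|left; auto].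
  destruct (Nat.ltb_spec (l * m + r) K) as [Bl|Bl]; [|right; left; auto].
  right; right. unfold thR.
  assert (HKr : 0 < INR K) by (apply lt_0_INR; lia).
  eapply Rle_trans. 2: apply (log_sep _ _ (INR K)).
  - rewrite INR_dst. rewrite !S_INR, !plus_INR, !mult_INR.
    replace (INR k * INR m + INR r + 1 - (INR l * INR m + INR r + 1)) with (INR m * (INR k - INR l)) by ring.
    rewrite Rabs_mult, (Rabs_right (INR m)) by (apply Rle_ge, pos_INR). right. field. lra.
  - split. apply (le_INR 1); lia. apply le_INR; lia.
  - split. apply (le_INR 1); lia. apply le_INR; lia.
Qed.

Lemma Uf_derive B al be th x : ex_derive (Uf B al be th) x.
Proof. induction B.
  - unfold Uf; simpl. apply ex_derive_const.
  - unfold Uf in *. simpl.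
    apply (ex_derive_plus (fun t => sR B (fun k => al k * cos (t * th k) + be k * sin (t * th k)))
             (fun t => al B * cos (t * th B) + be B * sin (t * th B))). auto. auto_derive. auto. Qed.

Lemma Vf_derive B al be th x : ex_derive (Vf B al be th) x.
Proof. induction B.
  - unfold Vf; simpl. apply ex_derive_const.
  - unfold Vf in *. simpl.
    apply (ex_derive_plus (fun t => sR B (fun k => be k * cos (t * th k) - al k * sin (t * th k)))
             (fun t => be B * cos (t * th B) - al B * sin (t * th B))). auto. auto_derive. auto. Qed.

Lemma ex_RInt_modUV B al be th a b :
  ex_RInt (fun t => sqrt (Uf B al be th t ^ 2 + Vf B al be th t ^ 2)) a b.
Proof.
  apply (ex_RInt_continuous (V := R_CompleteNormedModule)). intros z _.
  apply (continuous_comp (fun t => Uf B al be th t ^ 2 + Vf B al be th t ^ 2) sqrt).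
  - apply (ex_derive_continuous (K := R_AbsRing) (V := R_NormedModule)).
    apply (ex_derive_plus (fun t => Uf B al be th t ^ 2) (fun t => Vf B al be th t ^ 2)).
    apply (ex_derive_pow (Uf B al be th)). apply Uf_derive.
    apply (ex_derive_pow (Vf B al be th)). apply Vf_derive.
  - apply continuity_pt_filterlim. apply continuity_pt_sqrt. nra.
Qed.

Lemma cauchy_schwarz (g : R -> R) (T I2 : R) : 0 < T -> ex_RInt g (- T) T ->
  is_RInt (fun t => g t ^ 2) (- T) T I2 -> (RInt g (- T) T) ^ 2 <= 2 * T * I2.
Proof.
  intros HT Hg H2. set (I1 := RInt g (- T) T). set (c := I1 / (2 * T)).
  assert (H1 : is_RInt g (- T) T I1) by (apply (RInt_correct (V := R_CompleteNormedModule)); auto).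
  assert (H3 : is_RInt (fun t => g t ^ 2 + (- 2 * c) * g t + c ^ 2) (- T) T
                       (I2 + (- 2 * c) * I1 + 2 * T * c ^ 2)).
  { apply (is_RInt_plus (fun t => g t ^ 2 + (- 2 * c) * g t) (fun _ => c ^ 2)).
    apply (is_RInt_plus (fun t => g t ^ 2) (fun t => (- 2 * c) * g t)). auto.
    apply (is_RInt_scal g). auto.
    replace (2 * T * c ^ 2) with (scal (T - - T) (c ^ 2)). apply (is_RInt_const (V := R_NormedModule)).
    unfold scal; simpl; unfold mult; simpl; ring. }
  assert (H4 : 0 <= RInt (fun t => g t ^ 2 + (- 2 * c) * g t + c ^ 2) (- T) T).
  { apply RInt_ge_0. lra. eexists; eauto. intros x _. pose proof (pow2_ge_0 (g x - c)). nra. }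
  rewrite (is_RInt_unique _ _ _ _ H3) in H4.
  unfold c in H4. assert (E : I2 + - 2 * (I1 / (2 * T)) * I1 + 2 * T * (I1 / (2 * T)) ^ 2 = I2 - I1 ^ 2 / (2 * T)) by (field; lra).
  rewrite E in H4. assert (I1 ^ 2 / (2 * T) <= I2) by lra.
  apply Rmult_le_compat_l with (r := 2 * T) in H. 2: lra.
  replace (2 * T * (I1 ^ 2 / (2 * T))) with (I1 ^ 2) in H by (field; lra). lra.
Qed.

Lemma is_RInt_lsum {X} (L : list X) (f : X -> R -> R) (v : X -> R) a b :
  (forall x, In x L -> is_RInt (f x) a b (v x)) ->
  is_RInt (fun t => lsum L (fun x => f x t)) a b (lsum L v).
Proof.
  induction L; intros H.
  - replace (lsum nil v) with (scal (b - a) 0) by (unfold scal, lsum; simpl; unfold mult; simpl; ring).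
    eapply is_RInt_ext. 2: apply (is_RInt_const a b 0). intros; auto.
  - unfold lsum; simpl.
    apply (is_RInt_plus (f a0) (fun t => fold_right Rplus 0 (map (fun x => f x t) L))).
    apply H; simpl; auto. apply IHL. intros; apply H; simpl; auto.
Qed.

Definition w1 (chi : nat -> C) (r : nat) : C := (fst (chi (S r)), - snd (chi (S r))).
Definition w2 (chi : nat -> C) (r : nat) : C := (snd (chi (S r)), fst (chi (S r))).

Lemma sR_1 m : sR m (fun _ => 1) = INR m.
Proof. induction m; simpl sR. simpl; lra. rewrite IHm, S_INR. lra. Qed.

Lemma chi_n2_le1 m chi r : (m <> 0)%nat -> dirichlet_character m chi -> n2 (chi r) <= 1.
Proof. intros Hm D. destruct (Nat.eq_dec (Nat.gcd r m) 1).
  - rewrite (chi_norm1 m chi r Hm D e). lra.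
  - rewrite (chi_zero_or m chi r D n). unfold n2; simpl; lra. Qed.

Lemma pointwise_bessel K m a s (L : list (nat -> C)) t :
  (1 <= m)%nat -> NoDup L -> (forall chi, In chi L -> dirichlet_character m chi) ->
  lsum L (fun chi => Uf K (alF a s chi) (beF a s chi) thF t ^ 2 + Vf K (alF a s chi) (beF a s chi) thF t ^ 2)
  <= INR m * sR m (fun r => Uf K (alR a s K m r) (beR a s K m r) (thR m r) t ^ 2
                          + Vf K (alR a s K m r) (beR a s K m r) (thR m r) t ^ 2).
Proof.
  intros Hm HL HD.
  set (Y := fun r => (Uf K (alR a s K m r) (beR a s K m r) (thR m r) t, Vf K (alR a s K m r) (beR a s K m r) (thR m r) t)).
  assert (EY : sR m (fun r => Uf K (alR a s K m r) (beR a s K m r) (thR m r) t ^ 2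
                          + Vf K (alR a s K m r) (beR a s K m r) (thR m r) t ^ 2) = ip m Y Y).
  { unfold ip, Y. apply sR_ext; intros; simpl; ring. }
  rewrite EY.
  rewrite (lsum_ext L _ (fun chi => ip m Y (w1 chi) ^ 2 + ip m Y (w2 chi) ^ 2)).
  2: { intros chi Hc. destruct (HD chi Hc) as [Hp _].
       rewrite <- (Fs_fst K a s chi t), <- (Fs_snd K a s chi t).
       rewrite (Fs_fst_split K m a s chi t Hm Hp), (Fs_snd_split K m a s chi t Hm Hp).
       f_equal; f_equal; unfold ip, Y, w1, w2; apply sR_ext; intros; simpl; ring. }
  apply bessel. apply pos_INR. auto.
  - intros x y Hx Hy Hxy. destruct (chi_orth m x y ltac:(lia) (HD x Hx) (HD y Hy) Hxy) as [O1 O2].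
    unfold ip, w1, w2; simpl. repeat split.
    + rewrite <- O1. apply sR_ext; intros; ring.
    + rewrite (sR_ext m _ (fun r => - (snd (x (S r)) * fst (y (S r)) - fst (x (S r)) * snd (y (S r))))).
      rewrite <- (Rmult_1_l (sR m _)) at 1. 
      replace (sR m (fun r => - (snd (x (S r)) * fst (y (S r)) - fst (x (S r)) * snd (y (S r)))))
        with (-1 * sR m (fun r => snd (x (S r)) * fst (y (S r)) - fst (x (S r)) * snd (y (S r)))).
      rewrite O2; ring. rewrite <- sR_scal. apply sR_ext; intros; ring. intros; ring.
    + rewrite <- O2. apply sR_ext; intros; ring.
    + rewrite <- O1. apply sR_ext; intros; ring.
  - intros x Hx. pose proof (HD x Hx) as Dx. unfold ip, w1, w2; simpl. split; [|split].
    + rewrite <- (sR_0 m). apply sR_ext; intros; ring.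
    + apply sR_ext; intros; ring.
    + split.
      * eapply Rlt_le_trans. 2: apply sR_first. destruct Dx as [_ [_ [O _]]]. rewrite O. simpl. lra. lia.
        intros; nra.
      * rewrite <- sR_1. apply sR_le. intros r _. pose proof (chi_n2_le1 m x (S r) ltac:(lia) Dx).
        unfold n2 in H. lra.
Qed.

Lemma floor_facts x : 1 <= x -> (1 <= floor_nat x)%nat /\ INR (floor_nat x) <= x.
Proof. intros Hx. unfold floor_nat. destruct (base_Int_part x) as [H1 H2].
  assert (Hz : (1 <= Int_part x)%Z).
  { assert (0 < IZR (Int_part x)) by lra. apply lt_IZR in H. lia. }
  rewrite INR_IZR_INZ, Z2Nat.id by lia. split; auto. lia. Qed.

Definition Sa K a s := rsum K (fun n => Cmod (a n) ^ 2 / Rpower (INR n) (2 * s)).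

Lemma per_q T N s a m (L : list (nat -> C)) :
  0 < T -> (1 <= floor_nat N)%nat -> (1 <= m)%nat -> NoDup L ->
  (forall chi, In chi L -> dirichlet_character m chi) ->
  lsum L (fun chi => char_integral T N s a chi ^ 2)
  <= 2 * T * (2 * INR m * T + 4 * INR (floor_nat N) * sR (floor_nat N) hh) * Sa (floor_nat N) a s.
Proof.
  intros HT HK Hm HL HD. set (K := floor_nat N) in *.
  set (g := fun chi t => sqrt (Uf K (alF a s chi) (beF a s chi) thF t ^ 2 + Vf K (alF a s chi) (beF a s chi) thF t ^ 2)).
  set (WF := fun chi => sR K (fun k => sR K (fun l => (alF a s chi k * alF a s chi l + beF a s chi k * beF a s chi l)
                                              * Iint T (thF k - thF l)))).
  assert (E1 : forall chi, char_integral T N s a chi = RInt (g chi) (- T) T).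
  { intros chi. unfold char_integral. apply RInt_ext. intros x _.
    change (Cmod (Fs K a s chi x) = g chi x). unfold Cmod, g. rewrite Fs_fst, Fs_snd. auto. }
  assert (E2 : forall chi, is_RInt (fun t => Uf K (alF a s chi) (beF a s chi) thF t ^ 2 + Vf K (alF a s chi) (beF a s chi) thF t ^ 2) (- T) T (WF chi))
    by (intros; apply is_RInt_UV; lra).
  assert (S2 : lsum L (fun chi => char_integral T N s a chi ^ 2) <= lsum L (fun chi => 2 * T * WF chi)).
  { apply lsum_le. intros chi _. rewrite E1. apply cauchy_schwarz. auto. apply ex_RInt_modUV.
    eapply is_RInt_ext. 2: apply E2. intros x _. unfold g. rewrite pow2_sqrt. auto. nra. }
  rewrite lsum_scal in S2.
  assert (S4 : is_RInt (fun t => lsum L (fun chi => Uf K (alF a s chi) (beF a s chi) thF t ^ 2 + Vf K (alF a s chi) (beF a s chi) thF t ^ 2)) (- T) T (lsum L WF)).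
  { apply (is_RInt_lsum L (fun chi t => Uf K (alF a s chi) (beF a s chi) thF t ^ 2 + Vf K (alF a s chi) (beF a s chi) thF t ^ 2)).
    intros; apply E2. }
  set (VR := fun r => sR K (fun k => sR K (fun l => (alR a s K m r k * alR a s K m r l + beR a s K m r k * beR a s K m r l)
                                              * Iint T (thR m r k - thR m r l)))).
  assert (S5 : is_RInt (fun t => INR m * sR m (fun r => Uf K (alR a s K m r) (beR a s K m r) (thR m r) t ^ 2
                          + Vf K (alR a s K m r) (beR a s K m r) (thR m r) t ^ 2)) (- T) T (INR m * sR m VR)).
  { apply (is_RInt_scal (fun t => sR m (fun r => Uf K (alR a s K m r) (beR a s K m r) (thR m r) t ^ 2
                          + Vf K (alR a s K m r) (beR a s K m r) (thR m r) t ^ 2))).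
    apply (is_RInt_sR m (fun r t => Uf K (alR a s K m r) (beR a s K m r) (thR m r) t ^ 2
                          + Vf K (alR a s K m r) (beR a s K m r) (thR m r) t ^ 2)).
    intros; apply is_RInt_UV; lra. }
  assert (S6 : lsum L WF <= INR m * sR m VR).
  { rewrite <- (is_RInt_unique _ _ _ _ S4), <- (is_RInt_unique _ _ _ _ S5).
    apply RInt_le. lra. eexists; eauto. eexists; eauto.
    intros t _. apply pointwise_bessel; auto. }
  set (H := sR K hh). set (c := INR m / INR K).
  assert (HKpos : 0 < INR K) by (apply lt_0_INR; lia).
  assert (Hmpos : 0 < INR m) by (apply lt_0_INR; lia).
  assert (Hc : 0 < c) by (apply Rdiv_lt_0_compat; auto).
  assert (S7 : sR m VR <= sR m (fun r => (2 * T + 4 * H / c) * sR K (fun k => alR a s K m r k ^ 2 + beR a s K m r k ^ 2))).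
  { apply sR_le. intros r _. apply Vbound. lra. auto. intros. apply sep_class; auto. }
  rewrite sR_scal, energy in S7 by auto. fold (Sa K a s) in S7.
  assert (HS : 0 <= Sa K a s).
  { unfold Sa. rewrite rsum_sR. apply sR_nonneg. intros. apply Rdiv_le_0_compat. nra.
    unfold Rpower. apply exp_pos. }
  assert (INR m * (2 * T + 4 * H / c) = 2 * INR m * T + 4 * INR K * H) by (unfold c; field; lra).
  assert (INR m * sR m VR <= INR m * ((2 * T + 4 * H / c) * Sa K a s)) by (apply Rmult_le_compat_l; lra).
  assert (2 * T * lsum L WF <= 2 * T * (INR m * ((2 * T + 4 * H / c) * Sa K a s))) by (apply Rmult_le_compat_l; lra).
  assert (2 * T * (INR m * ((2 * T + 4 * H / c) * Sa K a s)) = 2 * T * (2 * INR m * T + 4 * INR K * H) * Sa K a s).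
  { rewrite <- H0. ring. }
  lra.
Qed.

Lemma ln_le_mono x y : 0 < x -> x <= y -> ln x <= ln y.
Proof. intros. destruct (Req_dec x y). subst; lra. apply Rlt_le, ln_increasing; lra. Qed.

Lemma ln_rpower_bound x eps : 0 < eps -> 1 <= x -> 1 + ln x <= (1 + 1 / eps) * Rpower x eps.
Proof.
  intros He Hx. assert (Hl : 0 <= ln x) by (rewrite <- ln_1; apply ln_le_mono; lra).
  assert (Hr : 1 + eps * ln x <= Rpower x eps).
  { unfold Rpower. destruct (Req_dec (eps * ln x) 0). rewrite H, exp_0. lra.
    pose proof (exp_ineq1 (eps * ln x) H). lra. }
  assert (ln x <= Rpower x eps / eps).
  { apply Rmult_le_reg_l with eps; auto. replace (eps * (Rpower x eps / eps)) with (Rpower x eps) by (field; lra). lra. }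
  assert (1 <= Rpower x eps) by nra.
  unfold Rdiv in H. replace ((1 + 1 / eps) * Rpower x eps) with (Rpower x eps + Rpower x eps * / eps) by (field; lra). lra.
Qed.

Lemma sR_const n c : sR n (fun _ => c) = INR n * c.
Proof. induction n; simpl sR. simpl; lra. rewrite IHn, S_INR. lra. Qed.

Theorem mainTheorem11 :
  forall eps : R, 0 < eps ->
  exists K : R, 0 < K /\
  forall (Rr T N sigma : R) (j : nat) (a : nat -> C)
         (L : nat -> list (nat -> C)),
    3 <= T -> 1 <= Rr -> 1 <= N -> 1 / 2 <= sigma -> (0 < j)%nat ->
    (* L q is a duplicate-free list of non-principal characters mod q j;
       taking all of them gives the sum over all non-principal characters *)
    (forall q, NoDup (L q)) ->
    (forall q chi, In chi (L q) -> nonprincipal_character (q * j) chi) ->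
    rsum (floor_nat Rr)
      (fun q => fold_right Rplus 0
                  (map (fun chi => (char_integral T N sigma a chi) ^ 2) (L q)))
    <= K * Rpower (INR j * Rr * N * T) eps
         * (Rr * N * T + INR j * Rr ^ 2 * T ^ 2)
         * rsum (floor_nat N) (fun n => Cmod (a n) ^ 2 / Rpower (INR n) (2 * sigma)).
Proof.
  intros eps Heps. exists (8 * (1 + 1 / eps)). split.
  { assert (0 < 1 / eps) by (apply Rdiv_lt_0_compat; lra). lra. }
  intros Rr T N sigma j a L HT HR HN Hs Hj HL HLc.
  destruct (floor_facts Rr HR) as [HRf1 HRf2]. destruct (floor_facts N HN) as [HK1 HK2].
  set (Rf := floor_nat Rr) in *. set (K := floor_nat N) in *.
  change (rsum K (fun n => Cmod (a n) ^ 2 / Rpower (INR n) (2 * sigma))) with (Sa K a sigma).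
  set (Sx := Sa K a sigma). set (H := sR K hh).
  assert (HS : 0 <= Sx).
  { unfold Sx, Sa. rewrite rsum_sR. apply sR_nonneg. intros. apply Rdiv_le_0_compat. nra.
    unfold Rpower. apply exp_pos. }
  assert (HH0 : 0 <= H) by (apply sR_nonneg; intros; apply hh_nonneg).
  assert (HjR : 1 <= INR j) by (apply (le_INR 1); lia).
  set (c := 2 * T * (2 * (Rr * INR j) * T + 4 * N * H) * Sx).
  assert (Step1 : rsum Rf (fun q => fold_right Rplus 0 (map (fun chi => char_integral T N sigma a chi ^ 2) (L q)))
                  <= INR Rf * c).
  { rewrite rsum_sR, <- sR_const. apply sR_le. intros i Hi.
    change (fold_right Rplus 0 (map (fun chi => char_integral T N sigma a chi ^ 2) (L (S i))))
      with (lsum (L (S i)) (fun chi => char_integral T N sigma a chi ^ 2)).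
    eapply Rle_trans. apply (per_q T N sigma a (S i * j) (L (S i))); auto. lra. nia.
    intros chi Hc. apply (HLc (S i) chi Hc).
    fold K Sx H. unfold c.
    assert (INR (S i * j) <= Rr * INR j).
    { rewrite mult_INR. apply Rmult_le_compat_r. lra. eapply Rle_trans. 2: apply HRf2. apply le_INR; lia. }
    assert (4 * INR K * H <= 4 * N * H) by nra.
    apply Rmult_le_compat_r; auto. apply Rmult_le_compat_l. lra. nra. }
  assert (Hc0 : 0 <= c).
  { unfold c. apply Rmult_le_pos; auto. apply Rmult_le_pos. lra.
    assert (0 <= Rr * INR j) by nra. assert (0 <= N * H) by nra. nra. }
  assert (Step2 : INR Rf * c <= Rr * c) by (apply Rmult_le_compat_r; auto).
  assert (HHl : H <= 1 + ln N).
  { eapply Rle_trans. apply harm_log; auto. apply Rplus_le_compat_l. apply ln_le_mono; auto.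
    apply lt_0_INR; lia. }
  assert (HlnN : 0 <= ln N) by (rewrite <- ln_1; apply ln_le_mono; lra).
  set (X := INR j * Rr * N * T).
  assert (HX : N <= X).
  { unfold X. assert (1 <= INR j * Rr) by nra. assert (N <= INR j * Rr * N) by nra. nra. }
  assert (Hlg : 1 + ln N <= (1 + 1 / eps) * Rpower X eps).
  { eapply Rle_trans. 2: apply ln_rpower_bound; auto; lra.
    apply Rplus_le_compat_l. apply ln_le_mono; lra. }
  set (P := Rr * N * T + INR j * Rr ^ 2 * T ^ 2).
  assert (Step3 : Rr * c <= 8 * (1 + ln N) * P * Sx).
  { unfold c, P.
    assert (Rr * (2 * T * (2 * (Rr * INR j) * T + 4 * N * H)) <= 8 * (1 + ln N) * (Rr * N * T + INR j * Rr ^ 2 * T ^ 2)).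
    { assert (Rr * (2 * T * (4 * N * H)) <= 8 * (1 + ln N) * (Rr * N * T)).
      { assert (0 <= Rr * N * T) by (repeat apply Rmult_le_pos; lra).
        replace (Rr * (2 * T * (4 * N * H))) with (8 * (Rr * N * T) * H) by ring.
        replace (8 * (1 + ln N) * (Rr * N * T)) with (8 * (Rr * N * T) * (1 + ln N)) by ring.
        apply Rmult_le_compat_l; lra. }
      assert (Rr * (2 * T * (2 * (Rr * INR j) * T)) <= 8 * (1 + ln N) * (INR j * Rr ^ 2 * T ^ 2)).
      { assert (0 <= INR j * Rr ^ 2 * T ^ 2) by (apply Rmult_le_pos; [apply Rmult_le_pos|]; nra).
        replace (Rr * (2 * T * (2 * (Rr * INR j) * T))) with (4 * (INR j * Rr ^ 2 * T ^ 2)) by ring.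
        nra. }
      nra. }
    assert (Rr * (2 * T * (2 * (Rr * INR j) * T + 4 * N * H) * Sx) = Rr * (2 * T * (2 * (Rr * INR j) * T + 4 * N * H)) * Sx) by ring.
    rewrite H1. apply Rmult_le_compat_r; auto. }
  assert (HP : 0 <= P).
  { unfold P. assert (0 <= INR j * Rr ^ 2 * T ^ 2) by (apply Rmult_le_pos; [apply Rmult_le_pos|]; nra).
    assert (0 <= Rr * N * T) by (repeat apply Rmult_le_pos; lra). lra. }
  assert (Step4 : 8 * (1 + ln N) * P * Sx <= 8 * (1 + 1 / eps) * Rpower X eps * P * Sx).
  { assert (0 <= P * Sx) by (apply Rmult_le_pos; auto).
    replace (8 * (1 + ln N) * P * Sx) with (8 * (P * Sx) * (1 + ln N)) by ring.
    replace (8 * (1 + 1 / eps) * Rpower X eps * P * Sx) with (8 * (P * Sx) * ((1 + 1 / eps) * Rpower X eps)) by ring.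
    apply Rmult_le_compat_l; lra. }
  lra.
Qed.
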